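(* Let $n\geq 3$ and, for $1\leq i\leq\lfloor n/2\rfloor$, let $G_i$ be the graph obtained from $K_n$ by deleting $i$ pairwise disjoint edges (equivalently, by successively deleting $i$ edges each joining two saturated vertices). Let $g:A\to B$ be a constant function with value $w\in B$, and let $F_{G_i}$ be the corresponding functigraph of $G_i$. Then: (i) if $1\leq i\leq\lfloor n/2\rfloor-1$, then $fix(F_{G_i})=2n-2i-3$; (ii) if $n$ is even and $i=n/2$, then $fix(F_{G_i})=n-1$; (iii) if $n$ is odd and $i=\lfloor n/2\rfloor$, then $fix(F_{G_i})=2\lfloor n/2\rfloor$ when $w$ is the unique saturated vertex of $G_2$ (the copy of $G_i$ on $B$), and $fix(F_{G_i})=2\lfloor n/2\rfloor-1$ otherwise.
   Context: A vertex of a graph is saturated if it is adjacent to all other vertices. A set $S\subseteq V(H)$ is a fixing set of a graph $H$ if the only automorphism of $H$ fixing every vertex of $S$ is the identity; $fix(H)$ is the minimum cardinality of a fixing set of $H$. Functigraph: let $G_1,G_2$ be disjoint copies of a connected graph $G$, with $A=V(G_1)$, $B=V(G_2)$, and let $g:A\to B$ be a function. The functigraph $F_G$ has vertex set $A\cup B$ and edge set $E(G_1)\cup E(G_2)\cup\{ug(u):u\in A\}$. *)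

(* Defs.v *)
From mathcomp Require Import all_boot all_fingroup.
Set Implicit Arguments. Unset Strict Implicit. Unset Printing Implicit Defensive.

(* A simple graph on a finite vertex type V is a relation e : rel V
   (intended symmetric and irreflexive). *)

Definition saturated (V : finType) (e : rel V) (x : V) : bool :=
  [forall y, (y != x) ==> e x y].

Definition is_automorphism (V : finType) (e : rel V) (p : {perm V}) : bool :=
  [forall x, forall y, e (p x) (p y) == e x y].

Definition fixing_set (V : finType) (e : rel V) (S : {set V}) : bool :=
  [forall p : {perm V},
     (is_automorphism e p && [forall x in S, p x == x]) ==> (p == 1%g)].

(* fix(H): minimum cardinality of a fixing set (V itself is always a fixing
   set, so #|V| is a valid neutral element for the minimum). *)
Definition fixnum (V : finType) (e : rel V) : nat :=
  \big[minn/#|V|]_(S : {set V} | fixing_set e S) #|S|.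

(* Functigraph of G (on T) w.r.t. g : A -> B; A = inl copy, B = inr copy. *)
Definition functigraph (T : finType) (G : rel T) (g : T -> T) : rel (T + T) :=
  fun x y =>
    match x, y with
    | inl a, inl b => G a b
    | inr a, inr b => G a b
    | inl a, inr b => g a == b
    | inr b, inl a => g a == b
    end.

Definition Kn_minus (n : nat) (M : {set {set 'I_n}}) : rel 'I_n :=
  fun x y => (x != y) && ([set x; y] \notin M).

Definition is_matching (n : nat) (M : {set {set 'I_n}}) : bool :=
  [forall E in M, #|E| == 2] && trivIset M.

(* Main.v *)
Require Import Defs.
From mathcomp Require Import all_boot all_fingroup zify.
Set Implicit Arguments. Unset Strict Implicit. Unset Printing Implicit Defensive.

Definition mateG n (M : {set {set 'I_n}}) (x : 'I_n) : 'I_n :=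
  odflt x [pick y | (y != x) && ~~ Kn_minus M x y].

Lemma Kn_sym n (M : {set {set 'I_n}}) x y : Kn_minus M x y = Kn_minus M y x.
Proof. by rewrite /Kn_minus eq_sym setUC. Qed.

Lemma Kn_irr n (M : {set {set 'I_n}}) x : Kn_minus M x x = false.
Proof. by rewrite /Kn_minus eqxx. Qed.

Lemma nonadj_uniq n (M : {set {set 'I_n}}) (hM : trivIset M) x y z :
  y != x -> ~~ Kn_minus M x y -> z != x -> ~~ Kn_minus M x z -> y = z.
Proof.
rewrite /Kn_minus => hyx; rewrite eq_sym hyx /= negbK => hy hzx.
rewrite eq_sym hzx /= negbK => hz.
case: (eqVneq [set x; y] [set x; z]) => [e|ne].
  have : y \in [set x; z] by rewrite -e !inE eqxx orbT.
  by rewrite !inE (negbTE hyx) /= => /eqP.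
move/trivIsetP: hM => /(_ _ _ hy hz ne) /disjointFr /(_ (set21 x y)).
by rewrite set21.
Qed.

Lemma mate_spec n (M : {set {set 'I_n}}) x :
  (mateG M x = x /\ forall y, y != x -> Kn_minus M x y) \/
  (mateG M x != x /\ ~~ Kn_minus M x (mateG M x)).
Proof.
rewrite /mateG; case: pickP => [y /andP[h1 h2]|h] /=; [right|left]; split => //.
by move=> y hy; move: (h y); rewrite hy /= => /negbFE.
Qed.

Lemma mate_uniq n (M : {set {set 'I_n}}) (hM : trivIset M) x y :
  y != x -> ~~ Kn_minus M x y -> mateG M x = y.
Proof.
move=> hyx hy; case: (mate_spec M x) => [[_ h]|[h1 h2]].
  by rewrite h in hy.
exact: (nonadj_uniq hM h1 h2 hyx hy).
Qed.

Lemma mateK n (M : {set {set 'I_n}}) (hM : trivIset M) x :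
  mateG M (mateG M x) = x.
Proof.
case: (mate_spec M x) => [[e _] | [h1 h2]]; first by rewrite !e.
apply: mate_uniq => //; first by rewrite eq_sym.
by rewrite Kn_sym.
Qed.

Lemma GE n (M : {set {set 'I_n}}) (hM : trivIset M) x y :
  Kn_minus M x y = (y != x) && (y != mateG M x).
Proof.
case: (mate_spec M x) => [[e h]|[ne hn]].
  rewrite e andbb; case: (eqVneq y x) => [->|nyx]; first by rewrite Kn_irr.
  exact: h.
case: (eqVneq y x) => [->|nyx]; first by rewrite Kn_irr.
case: (eqVneq y (mateG M x)) => [->|nym]; first exact: negbTE.
apply/idPn => h; case/eqP: nym; apply/esym; exact: mate_uniq.
Qed.

Lemma mate_inj n (M : {set {set 'I_n}}) (hM : trivIset M) : injective (mateG M).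
Proof. exact: (can_inj (mateK hM)). Qed.

Lemma perm_mate n (M : {set {set 'I_n}}) (hM : trivIset M) (s : {perm 'I_n}) :
  (forall a b, Kn_minus M (s a) (s b) = Kn_minus M a b) ->
  forall x, s (mateG M x) = mateG M (s x).
Proof.
move=> hG x; case: (eqVneq (mateG M x) x) => [e|ne].
  rewrite e; apply/esym; case: (eqVneq (mateG M (s x)) (s x)) => // ne'.
  exfalso; set m := mateG M (s x).
  have h1 : ~~ Kn_minus M (s x) m by rewrite GE // eqxx andbF.
  rewrite -(permKV s m) hG in h1.
  have h2 : (s^-1)%g m != x.
    by apply/eqP => h; move: ne'; rewrite -/m -h permKV eqxx.
  have := mate_uniq hM h2 h1; rewrite e => ex.
  by rewrite ex eqxx in h2.
apply/esym/mate_uniq => //; first by rewrite (inj_eq perm_inj).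
by rewrite hG GE // eqxx andbF.
Qed.

Lemma perm_id_crit n (M : {set {set 'I_n}}) (hM : trivIset M) (s : {perm 'I_n})
  (P : {set 'I_n}) :
  (forall a b, Kn_minus M (s a) (s b) = Kn_minus M a b) ->
  (forall x, x \in P -> s x = x) ->
  (forall x, mateG M x != x -> x \in P \/ mateG M x \in P) ->
  (forall x y, mateG M x = x -> mateG M y = y -> x != y -> x \in P \/ y \in P) ->
  forall x, s x = x.
Proof.
move=> hG hP H1 H2 x.
case: (boolP (x \in P)) => [/hP //|xP].
case: (eqVneq (mateG M x) x) => [e|ne].
  have ey : mateG M (s x) = s x by rewrite -(perm_mate hM hG) e.
  case: (eqVneq x (s x)) => [<- //|nxy].
  case: (H2 _ _ e ey nxy) => [|/hP h]; first by rewrite (negbTE xP).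
  by apply: (perm_inj h).
case: (H1 _ ne) => [h|/hP h]; first by rewrite h in xP.
by rewrite -{1}(mateK hM x) (perm_mate hM hG) h mateK.
Qed.

Lemma arith1 a b c d P m s : b<=a -> d<=1 -> a+c<=P -> c+d = s -> a+b = m -> m + 2*(s-1) <= 2*P.
Proof. move=> *; lia. Qed.

Lemma arith2 U a b c m s : a <= b -> c <= s - 1 -> a+b = m -> U <= a + c -> 2*U <= m + 2*(s-1).
Proof. move=> *; lia. Qed.

Definition matchedS n (M : {set {set 'I_n}}) := [set x | mateG M x != x].

Lemma count_lb n (M : {set {set 'I_n}}) (hM : trivIset M) (X P : {set 'I_n}) :
  (forall x, x \in X -> mateG M x \in X) ->
  (forall x, mateG M x != x -> x \notin X -> x \in P \/ mateG M x \in P) ->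
  (forall x y, mateG M x = x -> mateG M y = y -> x \notin X -> y \notin X ->
      x != y -> x \in P \/ y \in P) ->
  #|matchedS M :\: X| + 2 * (#|~: matchedS M :\: X| - 1) <= 2 * #|P|.
Proof.
move=> hX H1 H2.
set m' := matchedS M :\: X; set s' := ~: matchedS M :\: X.
have h1 : #|m' :\: P| <= #|m' :&: P|.
  rewrite -(card_imset _ (mate_inj hM)); apply: subset_leq_card.
  apply/subsetP => y /imsetP [x]; rewrite !inE => /andP[xP /andP[xX xm]] ->.
  have xm' : mateG M x != x by [].
  rewrite mateK // eq_sym xm andbT.
  apply/andP; split; first by apply: contra xX => /hX; rewrite mateK.
  by case: (H1 x xm' xX) => //; rewrite (negbTE xP).
have h2 : #|s' :\: P| <= 1.
  apply/card_le1_eqP => x y; rewrite !inE => /andP[xP /andP[xX /negPn/eqP xm]]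
     /andP[yP /andP[yX /negPn/eqP ym]].
  apply/eqP; apply/negP => /negP nxy.
  by case: (H2 _ _ ym xm yX xX nxy); [rewrite (negbTE yP)|rewrite (negbTE xP)].
have h3 : #|m' :&: P| + #|s' :&: P| <= #|P|.
  rewrite -(cardsID (matchedS M) P) leq_add //; apply: subset_leq_card;
    apply/subsetP => x; rewrite !inE; [by case/andP => /andP[_ ->] ->|].
  by case/andP => /andP[_ ->] ->.
exact: (arith1 h1 h2 h3 (cardsID P s') (cardsID P m')).
Qed.

Lemma count_ub n (M : {set {set 'I_n}}) (hM : trivIset M) (X : {set 'I_n}) (x0 : 'I_n) :
  (forall x, x \in X -> mateG M x \in X) ->
  exists P : {set 'I_n},
  [/\ (forall x, mateG M x != x -> x \notin X -> x \in P \/ mateG M x \in P),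
   (forall x y, mateG M x = x -> mateG M y = y -> x \notin X -> y \notin X ->
      x != y -> x \in P \/ y \in P) &
  2 * #|P| <= #|matchedS M :\: X| + 2 * (#|~: matchedS M :\: X| - 1)].
Proof.
move=> hX.
set m' := matchedS M :\: X; set s' := ~: matchedS M :\: X.
set L := [set x : 'I_n | x < mateG M x].
set u := odflt x0 [pick x in s'].
have mm : forall x, x \in m' -> mateG M x \in m'.
  move=> x; rewrite !inE => /andP[xX xm]; rewrite mateK // eq_sym xm andbT.
  by apply: contra xX => /hX; rewrite mateK.
exists ((m' :&: L) :|: (s' :\ u)); split.
- move=> x xm xX; have xm' : x \in m' by rewrite !inE xm xX.
  case: (boolP (x < mateG M x)) => hl.
    by left; rewrite !inE hl xm xX.
  right; rewrite in_setU; apply/orP; left; rewrite in_setI mm // inE mateK //.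
  by rewrite ltn_neqAle leqNgt hl andbT (inj_eq val_inj).
- move=> x y xm ym xX yX nxy.
  have xs : x \in s' by rewrite !inE xX xm eqxx.
  have ys : y \in s' by rewrite !inE yX ym eqxx.
  case: (eqVneq x u) => [ex|nxu].
    by right; rewrite in_setU; apply/orP; right; rewrite in_setD1 ys andbT -ex eq_sym.
  by left; rewrite in_setU; apply/orP; right; rewrite in_setD1 xs andbT nxu.
- have h1 : #|m' :&: L| <= #|m' :\: L|.
    rewrite -(card_imset _ (mate_inj hM)); apply: subset_leq_card.
    apply/subsetP => y /imsetP [x]; rewrite inE => /andP[xm xL] ->.
    rewrite inE mm // andbT !inE mateK // -leqNgt.
    by move: xL; rewrite inE => /ltnW.
  have h2 : #|s' :\ u| <= #|s'| - 1.
    case: (set_0Vmem s') => [->|[y ys]]; first by rewrite set0D cards0.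
    have us : u \in s'.
      rewrite /u; case: pickP => [z //|h]; by rewrite h in ys.
    by rewrite (cardsD1 u s') us add1n subn1.
  exact: (arith2 h1 h2 (cardsID L m') (leq_card_setU (m' :&: L) (s' :\ u))).
Qed.

Lemma autP (V : finType) (e : rel V) (p : {perm V}) :
  reflect (forall a b, e (p a) (p b) = e a b) (is_automorphism e p).
Proof.
apply: (iffP idP).
  by move=> /forallP h a b; move/forallP: (h a) => /(_ b) /eqP.
by move=> h; apply/forallP => a; apply/forallP => b; rewrite h.
Qed.

Lemma tperm_aut (V : finType) (e : rel V) x y :
  (forall a b, e a b = e b a) -> (forall a, e a a = false) ->
  (forall z, z != x -> z != y -> e x z = e y z) ->
  is_automorphism e (tperm x y).
Proof.
move=> es ei ht; apply/autP => a b.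
have ht' : forall z, z != x -> z != y -> e z x = e z y.
  by move=> z h1 h2; rewrite es (ht z h1 h2) es.
case: (tpermP x y a) => [->|->|/eqP ax /eqP ay]; case: (tpermP x y b) => [->|->|/eqP bx /eqP by_] //;
  first [ by rewrite !ei | by rewrite es | by rewrite (ht _ bx by_)
        | by rewrite (ht' _ ax ay) | by rewrite -(ht _ bx by_) | by rewrite -(ht' _ ax ay) ].
Qed.

Lemma fix_twins (V : finType) (e : rel V) (S : {set V}) x y :
  fixing_set e S -> is_automorphism e (tperm x y) -> x != y -> x \in S \/ y \in S.
Proof.
move=> hf ha nxy.
case: (boolP (x \in S)) => hx; first by left.
case: (boolP (y \in S)) => hy; first by right.
exfalso; move/forallP: hf => /(_ (tperm x y)); rewrite ha /=.
have -> : [forall x0 in S, tperm x y x0 == x0].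
  apply/forall_inP => z hz; rewrite tpermD //.
    by apply: contraNneq hx => ->.
  by apply: contraNneq hy => ->.
move=> /implyP /(_ isT) /eqP h.
by move: (tpermL x y); rewrite h perm1 => /eqP; rewrite (negbTE nxy).
Qed.

Definition FG n (M : {set {set 'I_n}}) (w : 'I_n) :=
  functigraph (Kn_minus M) (fun _ : 'I_n => w).

Lemma FG_sym n (M : {set {set 'I_n}}) w a b : FG M w a b = FG M w b a.
Proof. by case: a => a; case: b => b //=; rewrite Kn_sym. Qed.

Lemma FG_irr n (M : {set {set 'I_n}}) w a : FG M w a a = false.
Proof. by case: a => a /=; rewrite Kn_irr. Qed.

Lemma card_split n (S : {set 'I_n + 'I_n}) :
  #|S| = #|[set x | inl x \in S]| + #|[set x | inr x \in S]|.
Proof.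
have linj : injective (@inl 'I_n 'I_n) by move=> a b [].
have rinj : injective (@inr 'I_n 'I_n) by move=> a b [].
have eS : S = inl @: [set x | inl x \in S] :|: inr @: [set x | inr x \in S].
  have nl : forall (a : 'I_n) (A : {set 'I_n}), (inl a \in inr @: A) = false.
    by move=> a A; apply: negbTE; apply/negP => /imsetP [y _].
  have nr : forall (a : 'I_n) (A : {set 'I_n}), (inr a \in inl @: A) = false.
    by move=> a A; apply: negbTE; apply/negP => /imsetP [y _].
  apply/setP => z; rewrite in_setU; case: z => z;
    by rewrite ?nl ?nr ?orbF /= mem_imset // inE.
rewrite {1}eS cardsU !card_imset //.
have -> : inl @: [set x | inl x \in S] :&: inr @: [set x | inr x \in S] = set0.
  apply/setP => z; rewrite !inE; apply/negbTE/andP => [[/imsetP [a _ ->] /imsetP [b _ //]]].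
by rewrite cards0 subn0.
Qed.

Lemma inl_eq n (a b : 'I_n) : (inl a == inl b :> 'I_n + 'I_n) = (a == b).
Proof. by apply/eqP/eqP => [[]|->]. Qed.
Lemma inr_eq n (a b : 'I_n) : (inr a == inr b :> 'I_n + 'I_n) = (a == b).
Proof. by apply/eqP/eqP => [[]|->]. Qed.

Lemma fix_lb n (M : {set {set 'I_n}}) w (hM : trivIset M) S :
  fixing_set (FG M w) S ->
  (#|matchedS M :\: set0| + 2 * (#|~: matchedS M :\: set0| - 1)) +
  (#|matchedS M :\: [set w; mateG M w]| +
    2 * (#|~: matchedS M :\: [set w; mateG M w]| - 1)) <= 2 * #|S|.
Proof.
move=> hS; rewrite card_split mulnDr; apply: leq_add; apply: count_lb => //.
- by move=> x; rewrite inE.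
- move=> x xm _; rewrite !inE; apply: fix_twins hS _ _; last by rewrite inl_eq eq_sym.
  apply: tperm_aut; [exact: FG_sym|exact: FG_irr|].
  by case=> c _ _ //=; rewrite !GE // mateK // andbC.
- move=> x y xm ym _ _ nxy; rewrite !inE; apply: fix_twins hS _ _; last by rewrite inl_eq.
  apply: tperm_aut; [exact: FG_sym|exact: FG_irr|].
  case=> c h1 h2 //=; rewrite !GE // xm ym !andbb.
  have -> : c != x by apply: contraNneq h1 => ->.
  by have -> : c != y by apply: contraNneq h2 => ->.
- by move=> x; rewrite !inE => /orP[] /eqP ->; rewrite ?mateK // eqxx ?orbT.
- move=> x xm; rewrite !inE negb_or => /andP[xw xmw].
  apply: fix_twins hS _ _; last by rewrite inr_eq eq_sym.
  apply: tperm_aut; [exact: FG_sym|exact: FG_irr|].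
  case=> c _ _ /=; last by rewrite !GE // mateK // andbC.
  rewrite eq_sym (negbTE xw); apply/esym/negbTE.
  by apply: contra xmw => /eqP ->; rewrite mateK.
- move=> x y xm ym; rewrite !inE !negb_or => /andP[xw _] /andP[yw _] nxy.
  apply: fix_twins hS _ _; last by rewrite inr_eq.
  apply: tperm_aut; [exact: FG_sym|exact: FG_irr|].
  case=> c h1 h2 /=; first by rewrite eq_sym (negbTE xw) eq_sym (negbTE yw).
  rewrite !GE // xm ym !andbb.
  have -> : c != x by apply: contraNneq h1 => ->.
  by have -> : c != y by apply: contraNneq h2 => ->.
Qed.

Lemma arith3 x y n : x <= 2 -> x + y = n -> 3 <= n -> 0 < y.
Proof. move=> *; lia. Qed.

Lemma exists_third n (n3 : 3 <= n) (a b : 'I_n) : exists c, (c != a) && (c != b).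
Proof.
have h2 : #|[set a; b]| <= 2 by rewrite cards2; case: (a != b).
have hc := cardsC [set a; b]; rewrite card_ord in hc.
have : 0 < #|~: [set a; b]| by apply: arith3 h2 hc n3.
case/card_gt0P => c; rewrite !inE negb_or => h; by exists c.
Qed.

Definition isl (T1 T2 : Type) (x : T1 + T2) := if x is inl _ then true else false.

Lemma fix_ub n (M : {set {set 'I_n}}) w (hM : trivIset M) (n3 : 3 <= n)
  (PA PB : {set 'I_n}) :
  (forall x, mateG M x != x -> x \in PA \/ mateG M x \in PA) ->
  (forall x y, mateG M x = x -> mateG M y = y -> x != y -> x \in PA \/ y \in PA) ->
  (forall x, mateG M x != x -> x \notin [set w; mateG M w] ->
     x \in PB \/ mateG M x \in PB) ->
  (forall x y, mateG M x = x -> mateG M y = y -> x \notin [set w; mateG M w] ->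
     y \notin [set w; mateG M w] -> x != y -> x \in PB \/ y \in PB) ->
  PA != set0 ->
  fixing_set (FG M w) (inl @: PA :|: inr @: PB).
Proof.
move=> H1A H2A H1B H2B hPA.
set S0 := inl @: PA :|: inr @: PB.
have linj : injective (@inl 'I_n 'I_n) by move=> a b [].
have rinj : injective (@inr 'I_n 'I_n) by move=> a b [].
apply/forallP => p; apply/implyP => /andP [/autP hp /forall_inP hfix]; apply/eqP.
have hfix' : forall z, z \in S0 -> p z = z by move=> z /hfix /eqP.
pose nb x := [set y | FG M w x y].
have deg : forall x, #|nb (p x)| = #|nb x|.
  move=> x; rewrite -[RHS](card_imset _ (@perm_inj _ p)); apply: eq_card => y.
  rewrite inE -{1}(permKV p y) hp.
  by rewrite -{2}(permKV p y) mem_imset ?inE //; exact: perm_inj.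
have degl : forall z, #|nb (inl z)| <= n.
  move=> z; have : nb (inl z) \subset inr w |: inl @: [set~ z].
    apply/subsetP => y; rewrite inE; case: y => c /=.
      move=> h; rewrite in_setU1 mem_imset // !inE; apply/orP; right.
      by apply: contraTneq h => ->; rewrite Kn_irr.
    by move/eqP => <-; rewrite in_setU1 eqxx.
  move/subset_leq_card/leq_trans; apply.
  rewrite cardsU1; apply: leq_trans (leq_add (leq_b1 _) (leq_imset_card _ _)) _.
  by rewrite cardsC1 card_ord; case: (n) n3.
have degr : forall z, z != w -> #|nb (inr z)| <= n.
  move=> z zw; have : nb (inr z) \subset inr @: [set~ z].
    apply/subsetP => y; rewrite inE; case: y => c /=.
      by rewrite eq_sym (negbTE zw).
    move=> h; rewrite mem_imset // !inE.
    by apply: contraTneq h => ->; rewrite Kn_irr.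
  move/subset_leq_card/leq_trans; apply.
  apply: leq_trans (leq_imset_card _ _) _.
  by rewrite cardsC1 card_ord leq_pred.
have degw : n < #|nb (inr w)|.
  have [y0 /andP [h1 h2]] := exists_third n3 w (mateG M w).
  have : inr y0 |: inl @: [set: 'I_n] \subset nb (inr w).
    apply/subsetP => y; rewrite in_setU1 => /orP [/eqP ->|/imsetP [c _ ->]];
      by rewrite inE /= ?(GE hM) ?h1 ?h2 ?eqxx.
  move/subset_leq_card; apply: leq_trans.
  rewrite cardsU1 card_imset // cardsT card_ord.
  suff -> : inr y0 \notin inl @: [set: 'I_n] by [].
  by apply/imsetP => [[c _]].
have pw : p (inr w) = inr w.
  have := deg (inr w); case E: (p (inr w)) => [z|z] hd.
    by move: (degl z); rewrite hd leqNgt degw.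
  case: (eqVneq z w) => [-> //|nzw].
  by move: (degr z nzw); rewrite hd leqNgt degw.
case/set0Pn: hPA => a0 ha0.
have side : forall q : {perm 'I_n + 'I_n},
    (forall a b, FG M w (q a) (q b) = FG M w a b) -> q (inr w) = inr w ->
    q (inl a0) = inl a0 -> forall z, isl (q (inl z)).
  move=> q hq hqw hqa.
  have step : forall y z, isl (q (inl y)) -> Kn_minus M z y -> isl (q (inl z)).
    move=> y z; case E: (q (inl y)) => [c|c] // _ hzy.
    have := hq (inl z) (inl y); rewrite E /= hzy.
    case E2: (q (inl z)) => [d|d] //= /eqP wd.
    by move: E2; rewrite -wd -hqw => /perm_inj.
  move=> z; case: (eqVneq z a0) => [->|nza]; first by rewrite hqa.
  case: (boolP (Kn_minus M z a0)) => hza.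
    by apply: (step a0); rewrite ?hqa.
  have mz : mateG M z = a0 by apply: mate_uniq => //; rewrite eq_sym.
  have [y /andP [yz ya]] := exists_third n3 z a0.
  have hya : Kn_minus M y a0.
    have ma : mateG M a0 = z by rewrite -mz mateK.
    by rewrite Kn_sym GE // ma ya yz.
  have hzy : Kn_minus M z y by rewrite GE // mz yz ya.
  apply: (step y) => //; apply: (step a0) => //; by rewrite hqa.
have hS0a : inl a0 \in S0 by rewrite /S0 in_setU (mem_imset _ _ linj) ha0.
have hpa := hfix' _ hS0a.
have sideP := side p hp pw hpa.
have hp' : forall a b, FG M w ((p^-1)%g a) ((p^-1)%g b) = FG M w a b.
  by move=> a b; rewrite -[in RHS](permKV p a) -[in RHS](permKV p b) hp.
have pw' : (p^-1)%g (inr w) = inr w by rewrite -{1}pw permK.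
have pa' : (p^-1)%g (inl a0) = inl a0 by rewrite -{1}hpa permK.
have sideP' := side _ hp' pw' pa'.
pose sA z := if p (inl z) is inl c then c else z.
pose sB z := if p (inr z) is inr c then c else z.
have hsA : forall z, p (inl z) = inl (sA z).
  by move=> z; rewrite /sA; move: (sideP z); case: (p (inl z)).
have hsB : forall z, p (inr z) = inr (sB z).
  move=> z; rewrite /sB; case E: (p (inr z)) => [c|c] //.
  by move: (sideP' c); rewrite -E permK.
have sA_inj : injective sA.
  move=> x y h; have : p (inl x) = p (inl y) by rewrite !hsA h.
  by move/perm_inj => [].
have sB_inj : injective sB.
  move=> x y h; have : p (inr x) = p (inr y) by rewrite !hsB h.
  by move/perm_inj => [].
pose tA := perm sA_inj; pose tB := perm sB_inj.
have hGA : forall a b, Kn_minus M (tA a) (tA b) = Kn_minus M a b.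
  by move=> a b; rewrite !permE; have := hp (inl a) (inl b); rewrite !hsA.
have hGB : forall a b, Kn_minus M (tB a) (tB b) = Kn_minus M a b.
  by move=> a b; rewrite !permE; have := hp (inr a) (inr b); rewrite !hsB.
have idA : forall x, tA x = x.
  apply: (perm_id_crit hM hGA (P := PA)) => // x hx.
  rewrite permE; have := hfix' (inl x); rewrite hsA in_setU (mem_imset _ _ linj) hx => /(_ isT).
  by case.
have tBw : tB w = w.
  by rewrite permE; move: pw; rewrite hsB => -[].
have idB : forall x, tB x = x.
  apply: (perm_id_crit hM hGB (P := PB :|: [set w; mateG M w])).
  - move=> x; rewrite in_setU => /orP [hx|].
      rewrite permE; have := hfix' (inr x); rewrite hsB in_setU (mem_imset _ _ rinj) hx orbT.
      by move=> /(_ isT) [].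
    rewrite !inE => /orP [/eqP ->|/eqP ->] //.
    by rewrite (perm_mate hM hGB) tBw.
  - move=> x xm; case: (boolP (x \in [set w; mateG M w])) => hx.
      by left; rewrite in_setU hx orbT.
    by case: (H1B x xm hx) => h; [left|right]; rewrite in_setU h.
  - move=> x y xm ym nxy.
    case: (boolP (x \in [set w; mateG M w])) => hx.
      by left; rewrite in_setU hx orbT.
    case: (boolP (y \in [set w; mateG M w])) => hy.
      by right; rewrite in_setU hy orbT.
    by case: (H2B x y xm ym hx hy nxy) => h; [left|right]; rewrite in_setU h.
apply/permP => v; rewrite perm1; case: v => z.
  by rewrite hsA; have := idA z; rewrite permE => ->.
by rewrite hsB; have := idB z; rewrite permE => ->.
Qed.

Lemma matched_card n (M : {set {set 'I_n}}) (hm : is_matching M) :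
  #|matchedS M| = 2 * #|M|.
Proof.
case/andP: (hm) => /forall_inP h2 htriv.
have eC : matchedS M = cover M.
  apply/setP => x; rewrite inE; apply/idP/bigcupP.
    move=> xm; exists [set x; mateG M x]; last by rewrite set21.
    case: (mate_spec M x) => [[e _]|[_ hn]]; first by rewrite e eqxx in xm.
    by move: hn; rewrite /Kn_minus eq_sym xm /= negbK.
  case=> E hE xE; move: (h2 E hE) => /cards2P [a [b [nab eE]]].
  rewrite eE !inE in xE; subst E.
  case/orP: xE => /eqP ->.
    rewrite (@mate_uniq _ _ htriv a b); first by rewrite eq_sym.
      by rewrite eq_sym.
    by rewrite /Kn_minus nab /= negbK.
  rewrite (@mate_uniq _ _ htriv b a) //.
  by rewrite /Kn_minus eq_sym nab /= negbK setUC.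
rewrite eC; move/eqP: htriv => <-.
rewrite (eq_bigr (fun _ => 2)); last by move=> E /h2 /eqP.
by rewrite sum_nat_const mulnC.
Qed.

Lemma sat_mate n (M : {set {set 'I_n}}) (hM : trivIset M) x :
  saturated (Kn_minus M) x = (mateG M x == x).
Proof.
rewrite /saturated; apply/forallP/eqP.
  move=> h; case: (mate_spec M x) => [[e _]//|[ne hn]].
  by move: (h (mateG M x)); rewrite ne /= (negbTE hn).
by move=> e y; rewrite GE // e andbb; apply/implyP.
Qed.

Lemma bigmin_le (I : finType) (P : pred I) (F : I -> nat) x j :
  P j -> \big[minn/x]_(i | P i) F i <= F j.
Proof.
move=> Pj; change (\big[minn/x]_(i <- index_enum I | P i) F i <= F j).
have : j \in index_enum I by rewrite mem_index_enum.
elim: (index_enum I) => [//|a s IH]; rewrite big_cons inE => /orP [/eqP <-|/IH h].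
  by rewrite Pj geq_minl.
case: (P a) => //; exact: (leq_trans (geq_minr _ _) h).
Qed.

Lemma fixnum_char (V : finType) (e : rel V) (S0 : {set V}) c :
  fixing_set e S0 -> 2 * #|S0| <= c ->
  (forall S, fixing_set e S -> c <= 2 * #|S|) -> 2 * fixnum e = c.
Proof.
move=> h0 hc hlb; apply/eqP; rewrite eqn_leq; apply/andP; split.
  apply: leq_trans hc; rewrite leq_mul2l; apply/orP; right.
  exact: bigmin_le.
rewrite /fixnum; apply: (big_ind (fun k => c <= 2 * k)).
- apply: leq_trans (hlb _ h0) _; rewrite leq_mul2l max_card orbT //.
- by move=> x y hx hy; rewrite /minn; case: ifP.
- by move=> S hS; exact: hlb.
Qed.

Lemma arith4 m s : 2 <= m -> 2 <= m + 2 * (s - 1).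
Proof. move=> h1; exact: leq_trans h1 (leq_addr _ _). Qed.

Lemma projA n (PA PB : {set 'I_n}) :
  [set x | inl x \in inl @: PA :|: inr @: PB] = PA.
Proof.
apply/setP => x; rewrite !inE (mem_imset _ _ (fun a b (h : inl a = inl b) => let: erefl := h in erefl)).
by case: (x \in PA) => //=; apply/negbTE/negP => /imsetP [].
Qed.

Lemma projB n (PA PB : {set 'I_n}) :
  [set x | inr x \in inl @: PA :|: inr @: PB] = PB.
Proof.
apply/setP => x; rewrite !inE (mem_imset _ _ (fun a b (h : inr a = inr b) => let: erefl := h in erefl)).
by rewrite orbC; case: (x \in PB) => //=; apply/negbTE/negP => /imsetP [].
Qed.

Lemma fixnum_FG n (M : {set {set 'I_n}}) w (hm : is_matching M) (n3 : 3 <= n)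
  (i1 : 1 <= #|M|) :
  2 * fixnum (FG M w) =
  (#|matchedS M :\: set0| + 2 * (#|~: matchedS M :\: set0| - 1)) +
  (#|matchedS M :\: [set w; mateG M w]| +
    2 * (#|~: matchedS M :\: [set w; mateG M w]| - 1)).
Proof.
have hM : trivIset M by case/andP: hm.
have hXA : forall x, x \in (set0 : {set 'I_n}) -> mateG M x \in set0.
  by move=> x; rewrite inE.
have hXB : forall x, x \in [set w; mateG M w] -> mateG M x \in [set w; mateG M w].
  by move=> x; rewrite !inE => /orP[] /eqP ->; rewrite ?mateK // eqxx ?orbT.
have [PA [H1A H2A cA]] := count_ub hM w hXA.
have [PB [H1B H2B cB]] := count_ub hM w hXB.
have lbA := count_lb hM hXA H1A H2A.
have H1A' : forall x, mateG M x != x -> x \in PA \/ mateG M x \in PA.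
  by move=> x xm; apply: H1A; rewrite ?inE.
have H2A' : forall x y, mateG M x = x -> mateG M y = y -> x != y -> x \in PA \/ y \in PA.
  by move=> x y xm ym; apply: H2A; rewrite ?inE.
have nPA : PA != set0.
  rewrite -card_gt0; rewrite -(ltn_pmul2l (isT : 0 < 2)) muln0.
  apply: leq_trans lbA; rewrite setD0 matched_card //.
  by apply: leq_trans (leq_addr _ _); rewrite muln_gt0.
apply: (fixnum_char (S0 := inl @: PA :|: inr @: PB)).
- exact: fix_ub.
- by rewrite card_split projA projB mulnDr; apply: leq_add.
- by move=> S hS; apply: fix_lb.
Qed.

Lemma arith_sat n i h f (o : bool) : 1 <= n - 2 * i -> 1 <= i -> 3 <= n -> 2 * i <= n -> o + 2 * h = n -> i <= h ->
  2 * f = 2 * i + 2 * (n - 2 * i - 1) + (2 * i + 2 * (n - 2 * i - 1 - 1)) ->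
  [/\ (i <= h - 1 -> f = 2 * n - 2 * i - 3),
      (~~ o -> i = h -> f = n - 1)
    & (o -> i = h -> f = 2 * h)].
Proof. case: o => /= *; split; lia. Qed.

Lemma arith_mat n i h f (o : bool) : 1 <= i -> 3 <= n -> 2 * i <= n -> o + 2 * h = n -> i <= h ->
  2 * f = 2 * i + 2 * (n - 2 * i - 1) + ((2 * i - 2) + 2 * (n - 2 * i - 1)) ->
  [/\ (i <= h - 1 -> f = 2 * n - 2 * i - 3),
      (~~ o -> i = h -> f = n - 1)
    & (o -> i = h -> f = 2 * h - 1)].
Proof. case: o => /= *; split; lia. Qed.

Theorem theorem3p6 (n i : nat) (M : {set {set 'I_n}}) (w : 'I_n) :
  3 <= n -> 1 <= i <= n./2 -> is_matching M -> #|M| = i ->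
  let G := Kn_minus M in
  let f := fixnum (functigraph G (fun _ => w)) in
  [/\ (i <= n./2 - 1 -> f = 2 * n - 2 * i - 3),
      (~~ odd n -> i = n./2 -> f = n - 1)
    & (odd n -> i = n./2 ->
         f = if saturated G w then 2 * n./2 else 2 * n./2 - 1)].
Proof.
move=> n3 /andP [i1 ih] hm hMi G f.
have hM : trivIset M by case/andP: hm.
have i1' : 1 <= #|M| by rewrite hMi.
have hf := fixnum_FG w hm n3 i1'.
rewrite /FG -/G -/f in hf.
have cm : #|matchedS M| = 2 * i by rewrite matched_card // hMi.
have cs : #|~: matchedS M| = n - 2 * i.
  by have := cardsC (matchedS M); rewrite card_ord cm => hc; rewrite -[X in _ = X - _]hc addKn.
have hn := odd_double_half n; rewrite -muln2 mulnC in hn.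
have i2 : 2 * i <= n by rewrite -hn (leq_trans _ (leq_addl _ _)) // leq_mul2l ih orbT.
rewrite !setD0 cm cs in hf.
rewrite /G sat_mate //.
case: (eqVneq (mateG M w) w) => [e|ne].
  have h1 : #|matchedS M :\: [set w; mateG M w]| = 2 * i.
    rewrite cardsD (_ : _ :&: _ = set0) ?cards0 ?subn0 //.
    apply/setP => x; rewrite !inE e orbb.
    by case: (eqVneq x w) => [->|]; rewrite ?e ?eqxx ?andbF ?andbT.
  have h2 : #|~: matchedS M :\: [set w; mateG M w]| = n - 2 * i - 1.
    rewrite cardsD (_ : _ :&: _ = [set w]) ?cards1 ?cs //.
    apply/setP => x; rewrite !inE e orbb.
    by case: (eqVneq x w) => [->|]; rewrite ?e ?eqxx ?andbF ?andbT.
  rewrite h1 h2 in hf.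
  have s1 : 1 <= n - 2 * i.
    rewrite -cs; apply/card_gt0P; exists w; by rewrite !inE e eqxx.
  clearbody f; exact: arith_sat s1 i1 n3 i2 hn ih hf.
have h1 : #|matchedS M :\: [set w; mateG M w]| = 2 * i - 2.
  rewrite cardsD (_ : _ :&: _ = [set w; mateG M w]) ?cards2 ?cm 1?eq_sym ?ne //.
  apply/setIidPr; apply/subsetP => x; rewrite !inE => /orP[]/eqP->; rewrite ?mateK //.
  by rewrite eq_sym.
have h2 : #|~: matchedS M :\: [set w; mateG M w]| = n - 2 * i.
  rewrite cardsD (_ : _ :&: _ = set0) ?cards0 ?subn0 ?cs //.
  apply/setP => x; rewrite !inE; case: (eqVneq x w) => [->|xw]; first by rewrite ne.
  case: (eqVneq x (mateG M w)) => [->|xm]; first by rewrite mateK // eq_sym ne.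
  by rewrite andbF.
rewrite h1 h2 in hf.
clearbody f; exact: arith_mat i1 n3 i2 hn ih hf.
Qed.
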